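(* For each integer $m\ge1$, let $H_m$ be the configuration whose underlying graph is the path $a - b - c - d$ (edges $ab$, $bc$, $cd$), with wakeup tags $t_b=t_c=0$, $t_a=m$, $t_d=m+1$. Then each configuration $H_m$ is feasible, and every dedicated leader election algorithm for $H_m$ takes time at least $m$.
   Context: Model. A configuration is a finite simple undirected connected graph $G$ in which each node $v$ is tagged with a non-negative integer $t_v$ (wakeup tag). Nodes are anonymous and communicate in synchronous global rounds. A node $v$ wakes up in the first global round $r\le t_v$ in which it receives a message, if any, and otherwise in global round $t_v$; its local clock is $0$ in its wakeup round, it acts from local round $1$, and nodes do not know the global clock. In each round a node transmits a message to all neighbours, listens, or terminates. A listening node receives $M$ if exactly one neighbour transmits ($M$), hears collision noise (distinct from silence and messages) if at least two neighbours transmit, and silence otherwise; a transmitting node hears nothing. A DRIP is a common function mapping a node's history (what it heard in each local round $0,\ldots,i-1$, including whether/by which message it was woken) to its action in local round $i\ge1$, with every node eventually terminating permanently; a decision function maps each node's final history to $\{0,1\}$; a dedicated leader election algorithm for $G$ is a DRIP plus decision function such that exactly one node of $G$ outputs $1$; $G$ is feasible if one exists. The time of such an algorithm is the number of rounds until the nodes terminate. *)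

(* Defs.v *)
From mathcomp Require Import all_boot.
Set Implicit Arguments. Unset Strict Implicit. Unset Printing Implicit Defensive.

(* What a node hears in one local round. [HNothing] = it transmitted. *)
Inductive heard := HSilence | HNoise | HMsg of nat | HNothing.

(* Action of a node in a local round i >= 1. *)
Inductive action := Transmit of nat | Listen | Terminate.

(* History: list of what the node heard in local rounds 0, ..., i-1.
   Entry 0 is [HMsg M] if the node was woken by message M, otherwise what it
   heard (silence / noise) in its spontaneous wakeup round. *)
Definition history := seq heard.
Definition drip := history -> action.
Definition decision := history -> bool.

Inductive nstate := Asleep | Awake of history | Done of history.

Section Exec.
Variables (T : finType) (adj : rel T) (tag : T -> nat) (A : drip).

Definition transmits (s : nstate) : option nat :=
  if s is Awake h then (if A h is Transmit n then Some n else None) else None.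

Definition reception (s : T -> nstate) (v : T) : heard :=
  match pmap (fun u => transmits (s u)) [seq u <- enum T | adj v u] with
  | [::] => HSilence
  | [:: n] => HMsg n
  | _ => HNoise
  end.

Definition step (r : nat) (s : T -> nstate) (v : T) : nstate :=
  match s v with
  | Done h => Done h
  | Awake h =>
      match A h with
      | Terminate => Done h
      | Transmit _ => Awake (rcons h HNothing)
      | Listen => Awake (rcons h (reception s v))
      end
  | Asleep =>
      let x := reception s v in
      if (r <= tag v) && ((r == tag v) || (if x is HMsg _ then true else false))
      then Awake [:: x] else Asleep
  end.

Fixpoint exec (r : nat) : T -> nstate :=
  match r with
  | 0 => step 0 (fun _ => Asleep)
  | r'.+1 => step r'.+1 (exec r')
  end.

Definition all_terminated (r : nat) : bool :=
  [forall v, if exec r v is Done _ then true else false].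

Definition output (d : decision) (r : nat) (v : T) : bool :=
  if exec r v is Done h then d h else false.

End Exec.

Definition dedicated_LE (T : finType) (adj : rel T) (tag : T -> nat)
  (A : drip) (d : decision) : Prop :=
  exists r, all_terminated adj tag A r /\ #|[set v | output adj tag A d r v]| = 1.

Definition feasible (T : finType) (adj : rel T) (tag : T -> nat) : Prop :=
  exists A d, dedicated_LE adj tag A d.

(* The algorithm takes time at least t: no global round r < t by whose end
   all nodes have terminated (time = last global round in which a node
   terminates). *)
Definition time_at_least (T : finType) (adj : rel T) (tag : T -> nat)
  (A : drip) (t : nat) : Prop :=
  forall r, all_terminated adj tag A r -> t <= r.

(* The configuration H_m: path a - b - c - d, nodes 0,1,2,3 of 'I_4. *)
Definition H_adj : rel 'I_4 :=
  fun i j => (i.+1 == j :> nat) || (j.+1 == i :> nat).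

Definition H_tag (m : nat) (i : 'I_4) : nat :=
  match val i with
  | 0 => m
  | 1 => 0
  | 2 => 0
  | _ => m.+1
  end.

(* Main.v *)
Require Import Defs.
From mathcomp Require Import all_boot.
Definition na : 'I_4 := @Ordinal 4 0 isT.
Definition nb : 'I_4 := @Ordinal 4 1 isT.
Definition nc : 'I_4 := @Ordinal 4 2 isT.
Definition nd : 'I_4 := @Ordinal 4 3 isT.
Lemma filt (v : 'I_4) L :
  [seq k <- iota 0 4 | (v.+1 == k) || (k.+1 == v)] = map val L ->
  [seq u <- enum 'I_4 | H_adj v u] = L.
Proof.
move=> H; apply: (inj_map val_inj); rewrite -H.
have E := filter_map val (fun k => (v.+1 == k) || (k.+1 == v)) (enum 'I_4).
rewrite val_enum_ord in E. by rewrite E.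
Qed.
Lemma fa : [seq u <- enum 'I_4 | H_adj na u] = [:: nb].
Proof. exact: filt. Qed.
Lemma fb : [seq u <- enum 'I_4 | H_adj nb u] = [:: na; nc].
Proof. exact: filt. Qed.
Lemma fc : [seq u <- enum 'I_4 | H_adj nc u] = [:: nb; nd].
Proof. exact: filt. Qed.
Lemma fd : [seq u <- enum 'I_4 | H_adj nd u] = [:: nc].
Proof. exact: filt. Qed.

Definition rec1 (x : option nat) := if x is Some n then HMsg n else HSilence.
Definition rec2 (x y : option nat) :=
  match x, y with
  | None, None => HSilence
  | Some n, None => HMsg n
  | None, Some n => HMsg n
  | _, _ => HNoise
  end.
Lemma rec2C x y : rec2 x y = rec2 y x.
Proof. by case: x; case: y. Qed.

Section R.
Variables (tg : 'I_4 -> nat) (A : drip) (s : 'I_4 -> nstate).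
Lemma recA : reception H_adj A s na = rec1 (transmits A (s nb)).
Proof. by rewrite /reception fa /=; case: transmits. Qed.
Lemma recB : reception H_adj A s nb = rec2 (transmits A (s na)) (transmits A (s nc)).
Proof. by rewrite /reception fb /=; case: transmits; case: transmits. Qed.
Lemma recC : reception H_adj A s nc = rec2 (transmits A (s nb)) (transmits A (s nd)).
Proof. by rewrite /reception fc /=; case: transmits; case: transmits. Qed.
Lemma recD : reception H_adj A s nd = rec1 (transmits A (s nc)).
Proof. by rewrite /reception fd /=; case: transmits. Qed.
End R.

Lemma ord4P (v : 'I_4) : [\/ v = na, v = nb, v = nc | v = nd].
Proof.
case: v => [[|[|[|[|k]]]] Hv].
- by apply: Or41; apply: val_inj.
- by apply: Or42; apply: val_inj.
- by apply: Or43; apply: val_inj.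
- by apply: Or44; apply: val_inj.
- by [].
Qed.

Lemma exec_succ (T : finType) adj tg A r : @exec T adj tg A r.+1 = step adj tg A r.+1 (exec adj tg A r).
Proof. by []. Qed.

Lemma done_persist (T : finType) adj tg A r k (v : T) h :
  exec adj tg A r v = Done h -> exec adj tg A (k + r) v = Done h.
Proof.
move=> H; elim: k => [//|k IH].
by rewrite addSn exec_succ /step IH.
Qed.

Lemma sym_step m A r s : r < m -> s na = s nd -> s nb = s nc ->
  step H_adj (H_tag m) A r s na = step H_adj (H_tag m) A r s nd /\
  step H_adj (H_tag m) A r s nb = step H_adj (H_tag m) A r s nc.
Proof.
move=> Hr Had Hbc; rewrite /step recA recB recC recD Had Hbc rec2C.
have h1 : r <= m by apply: ltnW.
have h2 : r <= m.+1 by apply: (leq_trans h1).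
have h3 : (r == m) = false by rewrite ltn_eqF.
have h4 : (r == m.+1) = false by rewrite ltn_eqF // ltnS h1.
by rewrite /= h1 h2 h3 h4.
Qed.

Lemma exec_sym m A r : r < m ->
  exec H_adj (H_tag m) A r na = exec H_adj (H_tag m) A r nd /\
  exec H_adj (H_tag m) A r nb = exec H_adj (H_tag m) A r nc.
Proof.
elim: r => [|r IH] Hr.
  by apply: sym_step.
case: (IH (ltnW Hr)) => H1 H2.
rewrite exec_succ; exact: sym_step.
Qed.

Lemma lower m A d : dedicated_LE H_adj (H_tag m) A d -> time_at_least H_adj (H_tag m) A m.
Proof.
case=> r0 [Ht0 Hc] r Ht.
rewrite leqNgt; apply/negP => Hrm.
have Hsym : exec H_adj (H_tag m) A r0 na = exec H_adj (H_tag m) A r0 nd /\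
            exec H_adj (H_tag m) A r0 nb = exec H_adj (H_tag m) A r0 nc.
  have [Hl|Hl] := ltnP r0 m; first exact: exec_sym.
  have E : forall v, exec H_adj (H_tag m) A r0 v = exec H_adj (H_tag m) A r v.
    move=> v; move/forallP: Ht => /(_ v).
    case E: (exec _ _ _ r v) => [||h] // _.
    rewrite -(subnK (ltnW (leq_trans Hrm Hl))).
    exact: done_persist.
  rewrite !E; exact: exec_sym.
case: Hsym => H1 H2.
have O1 : output H_adj (H_tag m) A d r0 na = output H_adj (H_tag m) A d r0 nd by rewrite /output H1.
have O2 : output H_adj (H_tag m) A d r0 nb = output H_adj (H_tag m) A d r0 nc by rewrite /output H2.
move/eqP/cards1P: Hc => [x Hx].
have Hin : forall v, (v \in [set v | output H_adj (H_tag m) A d r0 v]) = (v == x).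
  by move=> v; rewrite Hx inE.
have := Hin x; rewrite eqxx inE => Ox.
case: (ord4P x) => ->{Hx} in Hin Ox *.
- by move: (Hin nd); rewrite inE -O1 Ox.
- by move: (Hin nc); rewrite inE -O2 Ox.
- by move: (Hin nb); rewrite inE O2 Ox.
- by move: (Hin na); rewrite inE O1 Ox.
Qed.

Definition is_sil (x : heard) := if x is HSilence then true else false.
Definition alg (m : nat) : drip := fun h =>
  if all is_sil h then (if size h == m.+1 then Transmit 0 else Listen) else Terminate.
Definition dec : decision := fun h => if h is HMsg _ :: _ then true else false.

Lemma rcons_nseq n (x : heard) : rcons (nseq n x) x = nseq n.+1 x.
Proof. by elim: n => //= n ->. Qed.

Lemma alg_S m n : alg m (nseq n HSilence) = if n == m.+1 then Transmit 0 else Listen.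
Proof. by rewrite /alg all_nseq orbT size_nseq. Qed.

Lemma phase1 m r : 0 < m -> r < m ->
  [/\ exec H_adj (H_tag m) (alg m) r na = Asleep,
      exec H_adj (H_tag m) (alg m) r nd = Asleep,
      exec H_adj (H_tag m) (alg m) r nb = Awake (nseq r.+1 HSilence) &
      exec H_adj (H_tag m) (alg m) r nc = Awake (nseq r.+1 HSilence)].
Proof.
move=> hm; elim: r => [|r IH] Hr.
  rewrite /= /step recA recB recC recD /=.
  by case: m hm Hr.
case: (IH (ltnW Hr)) => Ha Hd Hb Hc.
rewrite exec_succ /step recA recB recC recD Ha Hb Hc Hd /transmits !alg_S.
have -> : (r.+1 == m.+1) = false by rewrite eqSS ltn_eqF // ltnW.
rewrite /= !rcons_nseq.
rewrite /H_tag /=.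
have -> : (r.+1 <= m) = true by rewrite ltnW.
have -> : (r.+1 == m) = false by rewrite ltn_eqF.
by rewrite andbF.
Qed.

Lemma feas m : 0 < m -> feasible H_adj (H_tag m).
Proof.
case: m => [//|m] _.
exists (alg m.+1), dec, m.+3.
have [Ha Hd Hb Hc] := @phase1 m.+1 m (ltn0Sn m) (ltnSn m).
have E1 : [/\ exec H_adj (H_tag m.+1) (alg m.+1) m.+1 na = Awake [:: HSilence],
      exec H_adj (H_tag m.+1) (alg m.+1) m.+1 nd = Asleep,
      exec H_adj (H_tag m.+1) (alg m.+1) m.+1 nb = Awake (nseq m.+2 HSilence) &
      exec H_adj (H_tag m.+1) (alg m.+1) m.+1 nc = Awake (nseq m.+2 HSilence)].
  rewrite exec_succ /step recA recB recC recD Ha Hb Hc Hd /transmits !alg_S.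
  have -> : (m.+1 == m.+2) = false by rewrite eqSS ltn_eqF.
  rewrite /= !rcons_nseq /H_tag /=. by rewrite ltnSn eqxx andbF.
clear Ha Hb Hc Hd; case: E1 => Ha Hd Hb Hc.
have E2 : [/\ exec H_adj (H_tag m.+1) (alg m.+1) m.+2 na = Awake [:: HSilence; HMsg 0],
      exec H_adj (H_tag m.+1) (alg m.+1) m.+2 nd = Awake [:: HMsg 0],
      exec H_adj (H_tag m.+1) (alg m.+1) m.+2 nb = Awake (rcons (nseq m.+2 HSilence) HNothing) &
      exec H_adj (H_tag m.+1) (alg m.+1) m.+2 nc = Awake (rcons (nseq m.+2 HSilence) HNothing)].
  rewrite exec_succ /step recA recB recC recD Ha Hb Hc Hd /transmits !alg_S.
  have -> : alg m.+1 [:: HSilence] = Listen by [].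
  by rewrite /H_tag /= eqxx ltnSn.
clear Ha Hb Hc Hd; case: E2 => Ha Hd Hb Hc.
have Fa : exec H_adj (H_tag m.+1) (alg m.+1) m.+3 na = Done [:: HSilence; HMsg 0].
  by rewrite exec_succ /step Ha.
have Fd : exec H_adj (H_tag m.+1) (alg m.+1) m.+3 nd = Done [:: HMsg 0].
  by rewrite exec_succ /step Hd.
have Fb : exec H_adj (H_tag m.+1) (alg m.+1) m.+3 nb = Done (rcons (nseq m.+2 HSilence) HNothing).
  by rewrite exec_succ /step Hb /alg all_rcons.
have Fc : exec H_adj (H_tag m.+1) (alg m.+1) m.+3 nc = Done (rcons (nseq m.+2 HSilence) HNothing).
  by rewrite exec_succ /step Hc /alg all_rcons.
split.
  apply/forallP => v; case: (ord4P v) => ->; by rewrite ?Fa ?Fb ?Fc ?Fd.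
have -> : [set v | output H_adj (H_tag m.+1) (alg m.+1) dec m.+3 v] = [set nd].
  apply/setP => v; rewrite !inE /output.
  by case: (ord4P v) => ->; rewrite ?Fa ?Fb ?Fc ?Fd.
exact: cards1.
Qed.

Theorem lemma13 (m : nat) (hm : 1 <= m) :
  feasible H_adj (H_tag m) /\
  (forall (A : drip) (d : decision),
      dedicated_LE H_adj (H_tag m) A d -> time_at_least H_adj (H_tag m) A m).
Proof.
split; first exact: feas.
exact: lower.
Qed.
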